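(* Let $\phi(x_1,\dots,x_k)$ be a non-trivial triple clause. Then there exist $l\ge 1$ and variables $y^i_j\in\{a,b,c\}$ ($1\le i\le l$, $1\le j\le k$) such that the rooted triple formula $\bigwedge_{i=1}^{l}\phi(y^i_1,\dots,y^i_k)$ is logically equivalent to $ab|c$, i.e., it is satisfied by exactly the same pairs $(T,\alpha)$ (with $\alpha$ defined on $\{a,b,c\}$) as the literal $ab|c$.
   Context: A rooted tree $T$ has a distinguished root $r$; leaves are vertices with exactly one neighbour; $u$ lies strictly below $v$ if the path from $u$ to $r$ passes through $v$ and $u\neq v$; $\mathrm{yca}(u,v)$ is the vertex of maximal distance from $r$ above both $u$ and $v$; $T$ is binary if the root has two neighbours and every other vertex three or one. A triple clause is a disjunction of literals $xy|z$. A literal $xy|z$ is satisfied by $(T,\alpha)$ ($T$ rooted binary, $\alpha$ maps variables to leaves) if $\alpha(x),\alpha(y),\alpha(z)$ are pairwise distinct and $\mathrm{yca}(\alpha(x),\alpha(y))$ lies strictly below $\mathrm{yca}(\alpha(x),\alpha(z))$; a clause is satisfied if one of its literals is. Convention: clauses contain no literals of the forms $xx|y$, $xy|x$, $xy|y$. A triple clause is trivial if it is satisfied by every injective map of its variables into the leaves of every rooted binary tree. *)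

(* Defs.v *)
From mathcomp Require Import all_boot.
Set Implicit Arguments. Unset Strict Implicit. Unset Printing Implicit Defensive.

(* Rooted binary trees, up to isomorphism: full binary trees.  A vertex is
   addressed by its path from the root (false = left child, true = right
   child); the root is the empty path. *)
Inductive tree := Leaf | Node of tree & tree.

(* "T is binary": the root has two neighbours (it is a Node); every other
   vertex then has three neighbours (internal) or one (leaf). *)
Definition binary (t : tree) : bool := if t is Node _ _ then true else false.

Fixpoint is_leaf (t : tree) (p : seq bool) : bool :=
  match t, p with
  | Leaf, [::] => true
  | Node l r, b :: p' => is_leaf (if b then r else l) p'
  | _, _ => false
  end.

Definition below (u v : seq bool) : bool := prefix v u && (u != v).

(* yca u v: the deepest common ancestor = longest common prefix of paths *)
Fixpoint yca (u v : seq bool) : seq bool :=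
  match u, v with
  | x :: u', y :: v' => if x == y then x :: yca u' v' else [::]
  | _, _ => [::]
  end.

(* variables are natural numbers; literal (x, y, z) stands for xy|z *)
Definition literal := (nat * nat * nat)%type.
Definition clause := seq literal.
Definition formula := seq clause.

Definition lit_vars (L : literal) : seq nat := let: (x, y, z) := L in [:: x; y; z].
Definition clause_vars (C : clause) : seq nat := flatten (map lit_vars C).

(* convention: no literal of the form xx|y, xy|x, xy|y *)
Definition lit_ok (L : literal) : bool := uniq (lit_vars L).

(* satisfaction by (T, alpha); alpha : variables -> leaves (as paths) *)
Definition sat_lit (alpha : nat -> seq bool) (L : literal) : bool :=
  let: (x, y, z) := L in
  uniq [:: alpha x; alpha y; alpha z] &&
  below (yca (alpha x) (alpha y)) (yca (alpha x) (alpha z)).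

Definition sat_clause (alpha : nat -> seq bool) (C : clause) : bool :=
  has (sat_lit alpha) C.

Definition sat_formula (alpha : nat -> seq bool) (F : formula) : bool :=
  all (sat_clause alpha) F.

Definition trivial_clause (C : clause) : Prop :=
  forall (T : tree) (alpha : nat -> seq bool),
    binary T ->
    (forall v, v \in clause_vars C -> is_leaf T (alpha v)) ->
    {in clause_vars C &, injective alpha} ->
    sat_clause alpha C.

Definition rename_lit (sigma : nat -> nat) (L : literal) : literal :=
  let: (x, y, z) := L in (sigma x, sigma y, sigma z).
Definition rename_clause (sigma : nat -> nat) (C : clause) : clause :=
  map (rename_lit sigma) C.

(* Main.v *)
Require Import Defs.
From mathcomp Require Import all_boot zify.
From Stdlib Require Import Classical.

Definition f (P Q : seq bool) := size (yca P Q).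

Lemma ycaC P Q : yca P Q = yca Q P.
Proof.
elim: P Q => [|x P IH] [|y Q] //=.
rewrite eq_sym; case: eqP => [->|] //; by rewrite IH.
Qed.

Lemma fC P Q : f P Q = f Q P.
Proof. by rewrite /f ycaC. Qed.

Lemma f_le P Q : f P Q <= size P.
Proof.
rewrite /f; elim: P Q => [|x P IH] [|y Q] //=; case: ifP => //= _.
by rewrite ltnS IH.
Qed.

Lemma fPP P : f P P = size P.
Proof. rewrite /f; elim: P => //= x P IH; by rewrite eqxx /= IH. Qed.

Lemma ultra P Q R : minn (f P Q) (f Q R) <= f P R.
Proof.
rewrite /f; elim: P Q R => [|x P IH] [|y Q] [|z R] //=; rewrite ?minn0 ?min0n //.
case: (x =P y) => [Exy|_] /=; last by rewrite min0n.
subst y.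
case: (x == z) => /=; last by rewrite minn0.
by rewrite minnSS ltnS IH.
Qed.

Lemma below_f P Q R : below (yca P Q) (yca P R) = (f P R < f P Q).
Proof.
rewrite /f /below; elim: P Q R => [|x P IH] [|y Q] [|z R] //=.
- by case: ifP.
- case: ifP => //=; case: ifP => //=.
case: (x == y); case: (x == z) => //=.
by rewrite eqseq_cons eqxx /= IH.
Qed.

Lemma sat_litE al x y z : sat_lit al (x,y,z) =
  uniq [:: al x; al y; al z] && (f (al x) (al z) < f (al x) (al y)).
Proof. by rewrite /sat_lit below_f. Qed.

Lemma leaf_anti {T P Q} : is_leaf T P -> is_leaf T Q -> f P Q = size P -> P = Q.
Proof.
rewrite /f; elim: T P Q => [|l IHl r IHr] [|p P] [|q Q] //=.
case: (p =P q) => [<-|_] //= H1 H2 [] E; congr (_ :: _).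
by case: p H1 H2 => H1 H2; [apply: IHr|apply: IHl].
Qed.

Lemma lt_size {T P Q} : is_leaf T P -> is_leaf T Q -> P != Q -> f P Q < size P.
Proof.
move=> h1 h2 /eqP ne; rewrite ltn_neqAle f_le andbT; apply/eqP => E.
exact: ne (leaf_anti h1 h2 E).
Qed.

Lemma nth_diff {P Q} : f P Q < size P -> f P Q < size Q ->
  nth false P (f P Q) != nth false Q (f P Q).
Proof.
rewrite /f; elim: P Q => [|x P IH] [|y Q] //=.
case: (x =P y) => [<-|/eqP] //=; rewrite !ltnS; exact: IH.
Qed.

Lemma uniq3C (X Y Z : seq bool) : uniq [:: X; Y; Z] = uniq [:: Y; X; Z].
Proof.
rewrite /= !inE (eq_sym Y X).
by case: (X == Y); case: (X == Z); case: (Y == Z).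
Qed.

Lemma sat_lit_sym al x y z : sat_lit al (x,y,z) -> sat_lit al (y,x,z).
Proof.
rewrite !sat_litE uniq3C => /andP [-> h] /=.
have u1 := ultra (al y) (al x) (al z).
have u2 := ultra (al x) (al y) (al z).
rewrite (fC (al y) (al x)) in u1 *. lia.
Qed.

Lemma dup1 al s w : sat_lit al (s,s,w) = false.
Proof. by rewrite sat_litE /= !inE !eqxx. Qed.
Lemma dup2 al s t : sat_lit al (s,t,s) = false.
Proof. by rewrite sat_litE /= !inE !eqxx ?orbT. Qed.
Lemma dup3 al s t : sat_lit al (s,t,t) = false.
Proof. by rewrite sat_litE /= !inE !eqxx ?orbT ?andbF. Qed.

Definition sg (al : nat -> seq bool) (Z : seq bool) (k p q r : nat) (v : nat) : nat :=
  if k < f (al v) Z then p else if f (al v) Z == k then q else r.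
Arguments sat_lit_sym {al x y z}.

Lemma clause_case be (n1 n2 n3 n4 n5 k p q r : nat) :
  n1 <= n2 -> minn n3 n4 <= n1 -> minn n2 n3 <= n5 ->
  sat_lit be ((if k < n3 then p else if n3 == k then q else r),
              (if k < n4 then p else if n4 == k then q else r),
              (if k < n5 then p else if n5 == k then q else r)) ->
  sat_lit be (q, r, p) || sat_lit be (r, p, q).
Proof.
move=> m1 U1 U2.
case: (ltngtP k n3) => ?; case: (ltngtP k n4) => ?; case: (ltngtP k n5) => ? H;
first [by rewrite ?H ?orbT | by rewrite (sat_lit_sym H) ?orbT
      | by move: H; rewrite ?dup1 ?dup2 ?dup3 | exfalso; lia].
Qed.

Lemma back_case be (n3 n4 n5 k p q r : nat) :
  k = maxn n3 n4 -> n3 != n4 -> n3 < n5 -> n4 < n5 -> sat_lit be (q, r, p) ->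
  sat_lit be ((if k < n3 then p else if n3 == k then q else r),
              (if k < n4 then p else if n4 == k then q else r),
              (if k < n5 then p else if n5 == k then q else r)).
Proof.
move=> hk ne h3 h4 O.
case: (ltngtP k n3) => ?; case: (ltngtP k n4) => ?; case: (ltngtP k n5) => ?;
first [exact: O | exact: sat_lit_sym O | exfalso; lia].
Qed.
Arguments clause_case {be n1 n2 n3 n4 n5 k p q r}.
Arguments back_case {be n3 n4 n5 k p q r}.

Arguments sat_lit : simpl never.

Theorem mainTheorem2 (phi : clause) (a b c : nat) :
  phi != [::] ->
  all lit_ok phi ->
  ~ trivial_clause phi ->
  uniq [:: a; b; c] ->
  exists sigmas : seq (nat -> nat),
    0 < size sigmas /\
    all (fun sigma => all (fun v => sigma v \in [:: a; b; c]) (clause_vars phi))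
        sigmas /\
    (forall (T : tree) (alpha : nat -> seq bool),
       binary T ->
       is_leaf T (alpha a) -> is_leaf T (alpha b) -> is_leaf T (alpha c) ->
       (sat_formula alpha [seq rename_clause sigma phi | sigma <- sigmas]
        <-> sat_lit alpha (a, b, c))).
Proof.
move=> ne ok nt uabc.
have [T [al [bT [lv [inj nsat]]]]] : exists T al, binary T /\
   (forall v, v \in clause_vars phi -> is_leaf T (al v)) /\
   {in clause_vars phi &, injective al} /\ ~~ sat_clause al phi.
  apply: NNPP => H; apply: nt => T al bT lv inj.
  case E: (sat_clause al phi) => //; exfalso; apply: H.
  by exists T, al; rewrite E.
have memv x y z : (x,y,z) \in phi ->
    [/\ x \in clause_vars phi, y \in clause_vars phi & z \in clause_vars phi].
  by move=> H; split; apply/flatten_mapP; exists (x,y,z) => //; rewrite !inE eqxx ?orbT.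
have uq x y z : (x,y,z) \in phi -> uniq [:: al x; al y; al z].
  move=> H; have [hx hy hz] := memv _ _ _ H.
  have Hi : {in [:: x; y; z] &, injective al}.
    move=> u v; rewrite !inE => Hu Hv; apply: inj.
      by case/or3P: Hu => /eqP->.
    by case/or3P: Hv => /eqP->.
  rewrite (map_inj_in_uniq Hi : uniq [:: al x; al y; al z] = uniq [:: x; y; z]).
  by move/allP: ok => /(_ _ H).
have nsatL x y z : (x,y,z) \in phi -> f (al x) (al y) <= f (al x) (al z).
  move=> H; move/hasPn: nsat => /(_ _ H).
  by rewrite sat_litE uq //= -leqNgt.
have [[[x y] z] h0] : exists L, L \in phi.
  by case: (phi) ne => // L s _; exists L; rewrite mem_head.
have [hx hy hz] := memv _ _ _ h0.
have u0 := uq _ _ _ h0.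
have n0 := nsatL _ _ _ h0.
have lx := lv _ hx; have ly := lv _ hy; have lz := lv _ hz.
have [nxy nxz nyz] : [/\ al x != al y, al x != al z & al y != al z].
  by move: u0; rewrite /= !inE !negb_or => /and3P [/andP [-> ->] -> _].
have sZ : f (al x) (al z) < size (al z) /\ f (al y) (al z) < size (al z).
  by rewrite !(fC _ (al z)); split; [apply: (lt_size lz lx) | apply: (lt_size lz ly)];
    rewrite eq_sym.
have neq : f (al x) (al z) != f (al y) (al z).
  apply/eqP => E.
  have U := ultra (al x) (al z) (al y); rewrite (fC (al z)) -E minnn in U.
  have E2 : f (al x) (al y) = f (al x) (al z) by apply/eqP; rewrite eqn_leq n0 U.
  have s1 := lt_size lx ly nxy; have s2 := lt_size lx lz nxz.
  have s3 := lt_size ly lz nyz.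
  case: sZ => sZ1 sZ2.
  have s5 : f (al x) (al y) < size (al y) by rewrite E2 E.
  have d1 := nth_diff s1 s5.
  have d2 := nth_diff s2 sZ1.
  have d3 := nth_diff s3 sZ2.
  rewrite E2 E in d1; rewrite E in d2.
  move: d1 d2 d3; move: (nth false (al x) _) (nth false (al y) _) (nth false (al z) _).
  by case; case; case.
case: sZ => sZ1 sZ2.
have [k hk] : exists k, k = maxn (f (al x) (al z)) (f (al y) (al z)) by eexists.
exists [:: sg al (al z) k c a b; sg al (al z) k c b a].
split => //; split.
  rewrite /= andbT; apply/andP; split; apply/allP => v _; rewrite /sg;
    (case: ifP => _; [|case: ifP => _]); by rewrite !inE eqxx ?orbT.
move=> T' be _ _ _ _.
rewrite /sat_formula /= andbT /sat_clause /rename_clause !has_map.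
split.
- case/andP => /hasP [[[x1 y1] z1] h1 H1] /hasP [[[x2 y2] z2] h2 H2].
  have C1 : sat_lit be (a,b,c) || sat_lit be (b,c,a).
    have U1 := ultra (al x1) (al z) (al y1); have U2 := ultra (al z1) (al x1) (al z).
    rewrite (fC (al z) (al y1)) in U1; rewrite (fC (al z1)) in U2.
    apply: (clause_case (nsatL _ _ _ h1) U1 U2); exact: H1.
  have C2 : sat_lit be (b,a,c) || sat_lit be (a,c,b).
    have U1 := ultra (al x2) (al z) (al y2); have U2 := ultra (al z2) (al x2) (al z).
    rewrite (fC (al z) (al y2)) in U1; rewrite (fC (al z2)) in U2.
    apply: (clause_case (nsatL _ _ _ h2) U1 U2); exact: H2.
  case/orP: C1 => // Oa; case/orP: C2 => [/sat_lit_sym //|Ob]; exfalso.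
  move: Oa Ob; rewrite !sat_litE => /andP [_ Oa] /andP [_ Ob].
  have U := ultra (be a) (be c) (be b).
  rewrite (fC (be b) (be a)) in Oa; rewrite (fC (be c) (be b)) in U.
  move: Oa Ob U; clear; lia.
- move=> Oc.
  have fz := fPP (al z).
  have s1 : f (al x) (al z) < f (al z) (al z) by rewrite fz.
  have s2 : f (al y) (al z) < f (al z) (al z) by rewrite fz.
  apply/andP; split; apply/hasP; exists (x,y,z) => //.
    exact: (back_case hk neq s1 s2 Oc).
  exact: (back_case hk neq s1 s2 (sat_lit_sym Oc)).
Qed.
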